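(* Let $\succcurlyeq$ be a preference relation on the set $\mathcal{B}$ of bets over a propositional language $\mathcal{L}$ satisfying Non-Triviality, Objective Expected Utility and Implication, and let $\mathcal{T}\subseteq\mathcal{L}$ be a theory. Then there exists a unique sub-theory $\mathcal{S}\subseteq\mathcal{T}$ such that $\succcurlyeq$ satisfies $\mathcal{S}$-Implication and, for any $\mathcal{S}'$ with $\mathcal{S}\subsetneq\mathcal{S}'\subseteq\mathcal{T}$, $\succcurlyeq$ does not satisfy $\mathcal{S}'$-Implication.
   Context: Let $\mathbb{P}$ be a set of propositional variables containing distinguished $\mathbf{T}$, $\mathbf{F}$, and $\mathcal{L}$ the language generated by $\neg,\land,\lor$; $\phi\implies\psi$ means $\psi$ is deducible from $\phi$ in classical propositional logic. A theory is a set $\mathcal{T}\subseteq\mathcal{L}$ closed under logical implication (anything deducible from elements of $\mathcal{T}$ lies in $\mathcal{T}$) with $\mathbf{F}\notin\mathcal{T}$. For a set of statements $\mathcal{S}$, write $\phi\overset{\mathcal{S}}{\implies}\psi$ if $\psi$ can be deduced from $\phi$ together with the elements of $\mathcal{S}$ in propositional logic. A bet is a finitely supported $b:\mathcal{L}\to[0,1]$ summing to $1$; $b_\phi$ is the point-mass bet on $\phi$; the set $\mathcal{B}$ of bets is a mixture space under pointwise mixtures and $\succcurlyeq$ is a relation on it. Non-Triviality: $b_{\mathbf{T}}\succcurlyeq b_\phi\succcurlyeq b_{\mathbf{F}}$ for all $\phi$ and $b_{\mathbf{T}}\succ b_{\mathbf{F}}$. Objective Expected Utility: $\succcurlyeq$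 is complete, transitive, Archimedean and satisfies Independence. Implication: $\phi\implies\psi$ implies $b_\psi\succcurlyeq b_\phi$. $\mathcal{S}$-Implication: $\phi\overset{\mathcal{S}}{\implies}\psi$ implies $b_\psi\succcurlyeq b_\phi$. *)

(* Defs.v *)
From Stdlib Require Import Reals List Classical ClassicalEpsilon.
Open Scope R_scope.
Set Implicit Arguments.

Inductive form (P : Type) : Type :=
| Var : P -> form P
| Neg : form P -> form P
| And : form P -> form P -> form P
| Or  : form P -> form P -> form P.
Arguments Var {P} _.

Section Logic.
Variables (P : Type) (Tv Fv : P).

Definition admissible (v : P -> bool) : Prop := v Tv = true /\ v Fv = false.

Fixpoint eval (v : P -> bool) (f : form P) : bool :=
  match f with
  | Var p => v p
  | Neg a => negb (eval v a)
  | And a b => andb (eval v a) (eval v b)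
  | Or a b => orb (eval v a) (eval v b)
  end.

(* phi ==S==> psi : psi is classically deducible from phi together with the
   elements of S (by soundness/completeness + compactness: semantic consequence). *)
Definition implies_with (S : form P -> Prop) (phi psi : form P) : Prop :=
  forall v, admissible v -> (forall s, S s -> eval v s = true) ->
    eval v phi = true -> eval v psi = true.

Definition implies (phi psi : form P) : Prop :=
  implies_with (fun _ => False) phi psi.

Definition deducible_from (S : form P -> Prop) (psi : form P) : Prop :=
  forall v, admissible v -> (forall s, S s -> eval v s = true) -> eval v psi = true.

Definition is_theory (Th : form P -> Prop) : Prop :=
  (forall psi, deducible_from Th psi -> Th psi) /\ ~ Th (Var Fv).

Definition bet := form P -> R.

Definition is_bet (b : bet) : Prop :=
  (forall f, 0 <= b f <= 1) /\
  exists l : list (form P), NoDup l /\ (forall f, b f <> 0 -> In f l) /\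
    fold_right (fun f acc => b f + acc) 0 l = 1.

Definition point (phi : form P) : bet :=
  fun f => if excluded_middle_informative (f = phi) then 1 else 0.

Definition mix (a : R) (b c : bet) : bet := fun f => a * b f + (1 - a) * c f.

Variable pref : bet -> bet -> Prop.

Definition spref (b c : bet) : Prop := pref b c /\ ~ pref c b.

Definition NonTriviality : Prop :=
  (forall phi, pref (point (Var Tv)) (point phi) /\ pref (point phi) (point (Var Fv)))
  /\ spref (point (Var Tv)) (point (Var Fv)).

Definition Complete : Prop :=
  forall b c, is_bet b -> is_bet c -> pref b c \/ pref c b.

Definition Transitive : Prop :=
  forall b c d, is_bet b -> is_bet c -> is_bet d -> pref b c -> pref c d -> pref b d.

Definition Archimedean : Prop :=
  forall b c d, is_bet b -> is_bet c -> is_bet d -> spref b c -> spref c d ->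
    exists a1 a2, 0 < a1 < 1 /\ 0 < a2 < 1 /\
      spref (mix a1 b d) c /\ spref c (mix a2 b d).

Definition Independence : Prop :=
  forall b c d a, is_bet b -> is_bet c -> is_bet d -> 0 < a <= 1 ->
    (pref b c <-> pref (mix a b d) (mix a c d)).

Definition ObjectiveEU : Prop :=
  Complete /\ Transitive /\ Archimedean /\ Independence.

Definition Implication : Prop :=
  forall phi psi, implies phi psi -> pref (point psi) (point phi).

Definition S_Implication (S : form P -> Prop) : Prop :=
  forall phi psi, implies_with S phi psi -> pref (point psi) (point phi).

End Logic.

(* Main.v *)
Require Import Defs.
From Stdlib Require Import Reals.
From Stdlib Require Import List Classical ClassicalEpsilon Lra.
From mathcomp Require classical_sets.
Import ListNotations.

Lemma zorn_plain (T : Type) (PP : (T -> Prop) -> Prop) :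
  (forall F : (T -> Prop) -> Prop, (forall A, F A -> PP A) ->
     (forall A B, F A -> F B -> (forall t, A t -> B t) \/ (forall t, B t -> A t)) ->
     PP (fun t => exists2 A, F A & A t)) ->
  exists A, PP A /\ forall B, (forall t, A t -> B t) -> ~ (forall t, B t -> A t) -> ~ PP B.
Proof.
  intros H.
  destruct (@classical_sets.Zorn_bigcup T PP) as [A [HA HB]].
  - intros F HF Ht. apply H; [exact HF | exact Ht].
  - exists A. split; [exact HA|]. intros B h1 h2. apply HB. split; assumption.
Qed.

Section Compact.
Variables (P : Type) (Tv Fv : P).

Definition satl (v : P -> bool) (l : list (form P)) := forall f, In f l -> eval v f = true.

Definition FS (G : form P -> Prop) : Prop :=
  forall l, (forall f, In f l -> G f) -> exists v, admissible Tv Fv v /\ satl v l.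

Lemma satl_app v l1 l2 : satl v (l1 ++ l2) -> satl v l1 /\ satl v l2.
Proof.
  intros H; split; intros f Hf; apply H; apply in_or_app; auto.
Qed.

Lemma split_list (M : form P -> Prop) (g : form P) l :
  (forall f, In f l -> M f \/ f = g) ->
  exists k, (forall f, In f k -> M f) /\ (forall f, In f l -> In f k \/ f = g).
Proof.
  induction l as [|a l IH]; intros H.
  - exists []. split; intros f Hf; inversion Hf.
  - destruct IH as [k [Hk1 Hk2]]. { intros f Hf; apply H; right; exact Hf. }
    destruct (H a (or_introl eq_refl)) as [Ha|Ha].
    + exists (a :: k). split.
      * intros f [<-|Hf]; auto.
      * intros f [<-|Hf]; [left; left; reflexivity|]. destruct (Hk2 f Hf); auto; left; right; auto.
    + exists k. split; auto. intros f [<-|Hf]; auto.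
Qed.

Lemma split_list2 (M Q : form P -> Prop) l :
  (forall f, In f l -> M f \/ Q f) ->
  exists k, (forall f, In f k -> M f) /\ (forall f, In f l -> In f k \/ Q f).
Proof.
  induction l as [|a l IH]; intros H.
  - exists []. split; intros f Hf; inversion Hf.
  - destruct IH as [k [Hk1 Hk2]]. { intros f Hf; apply H; right; exact Hf. }
    destruct (H a (or_introl eq_refl)) as [Ha|Ha].
    + exists (a :: k). split.
      * intros f [<-|Hf]; auto.
      * intros f [<-|Hf]; [left; left; reflexivity|]. destruct (Hk2 f Hf); auto; left; right; auto.
    + exists k. split; auto. intros f [<-|Hf]; auto.
Qed.

Lemma compactness (X : form P -> Prop) : FS X ->
  exists v, admissible Tv Fv v /\ forall f, X f -> eval v f = true.
Proof.
  intros HX.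
  destruct (@zorn_plain (form P) (fun A => FS (fun f => X f \/ A f))) as [A [HA Hmax]].
  { intros F HF Htot l Hl.
    assert (Hc : (forall f, In f l -> X f) \/
                 exists A0, F A0 /\ forall f, In f l -> X f \/ A0 f).
    { clear HX HF. induction l as [|a l IH].
      - left. intros f Hf; inversion Hf.
      - destruct IH as [IH|[A0 [HA0 IH]]].
        { intros f Hf; apply Hl; right; exact Hf. }
        + destruct (Hl a (or_introl eq_refl)) as [Ha|[A1 HA1 Ha]].
          * left. intros f [<-|Hf]; auto.
          * right. exists A1. split; auto. intros f [<-|Hf]; auto.
        + destruct (Hl a (or_introl eq_refl)) as [Ha|[A1 HA1 Ha]].
          * right. exists A0. split; auto. intros f [<-|Hf]; auto.
          * destruct (Htot A0 A1 HA0 HA1) as [H01|H10].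
            -- right. exists A1. split; auto. intros f [<-|Hf]; auto.
               destruct (IH f Hf); auto.
            -- right. exists A0. split; auto. intros f [<-|Hf]; auto. }
    destruct Hc as [Hc|[A0 [HA0 Hc]]].
    - apply HX; exact Hc.
    - apply (HF A0 HA0); exact Hc. }
  set (M := fun f => X f \/ A f).
  assert (HmaxM : forall f, FS (fun g => M g \/ g = f) -> M f).
  { intros f Hf. apply NNPP; intros Hn.
    apply (Hmax (fun g => A g \/ g = f)).
    - intros t Ht; left; exact Ht.
    - intros Hs. apply Hn. right. apply Hs. right. reflexivity.
    - intros l Hl. apply Hf. intros g Hg. destruct (Hl g Hg) as [H|[H|H]].
      + left; left; auto.
      + left; right; auto.
      + right; auto. }
  assert (HFS : FS M) by exact HA.
  assert (Hded : forall l g, (forall f, In f l -> M f) ->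
            (forall v, admissible Tv Fv v -> satl v l -> eval v g = true) -> M g).
  { intros l g Hl Hg. apply HmaxM. intros l' Hl'.
    destruct (split_list M g l' Hl') as [k [Hk1 Hk2]].
    destruct (HFS (l ++ k)) as [v [Hv Hs]].
    { intros f Hf. destruct (in_app_or _ _ _ Hf); auto. }
    destruct (satl_app _ _ _ Hs) as [Hs1 Hs2].
    exists v. split; auto. intros f Hf. destruct (Hk2 f Hf) as [H|H]; auto.
    subst. apply Hg; auto. }
  assert (Hnb : forall f, ~ (M f /\ M (Neg f))).
  { intros f [H1 H2]. destruct (HFS [f; Neg f]) as [v [_ Hv]].
    { intros g [<-|[<-|[]]]; auto. }
    assert (e1 := Hv f (or_introl eq_refl)).
    assert (e2 := Hv (Neg f) (or_intror (or_introl eq_refl))).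
    simpl in e2. rewrite e1 in e2. discriminate. }
  assert (Hneg : forall f, M f \/ M (Neg f)).
  { intros f. destruct (classic (M f)) as [H|H]; [left; auto|right].
    assert (Hn1 : ~ FS (fun g => M g \/ g = f)) by (intro Hc; apply H; apply HmaxM; auto).
    apply HmaxM. intros l2 Hl2.
    apply NNPP; intros Hno. apply Hn1. intros l1 Hl1.
    destruct (split_list M f l1 Hl1) as [k1 [Hk1 Hk1']].
    destruct (split_list M (Neg f) l2 Hl2) as [k2 [Hk2 Hk2']].
    destruct (HFS (k1 ++ k2)) as [v [Hv Hs]].
    { intros g Hg. destruct (in_app_or _ _ _ Hg); auto. }
    destruct (satl_app _ _ _ Hs) as [Hs1 Hs2].
    destruct (eval v f) eqn:E.
    - exists v. split; auto. intros g Hg. destruct (Hk1' g Hg) as [h|h]; auto. subst; auto.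
    - exfalso. apply Hno. exists v. split; auto. intros g Hg.
      destruct (Hk2' g Hg) as [h|h]; auto. subst; simpl; rewrite E; auto. }
  set (v := fun p => if excluded_middle_informative (M (Var p)) then true else false).
  assert (Htruth : forall f, eval v f = true <-> M f).
  { induction f as [p|a IHa|a IHa b IHb|a IHa b IHb]; simpl.
    - unfold v. destruct (excluded_middle_informative (M (Var p))); split; auto; intros; try discriminate; contradiction.
    - destruct (eval v a) eqn:E; simpl; split; intros H; try discriminate.
      + exfalso. apply (Hnb a). split; [apply IHa; auto|auto].
      + destruct (Hneg a) as [h|h]; auto. apply IHa in h. congruence.
      + reflexivity.
    - split.
      + intros H. apply Bool.andb_true_iff in H. destruct H as [H1 H2].
        apply (Hded [a; b]).
        * intros g [<-|[<-|[]]]; [apply IHa|apply IHb]; auto.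
        * intros w _ Hw. simpl. rewrite (Hw a (or_introl eq_refl)), (Hw b (or_intror (or_introl eq_refl))). reflexivity.
      + intros H. apply Bool.andb_true_iff. split.
        * apply IHa. apply (Hded [And a b]). intros g [<-|[]]; auto.
          intros w _ Hw. specialize (Hw _ (or_introl eq_refl)). simpl in Hw.
          apply Bool.andb_true_iff in Hw. tauto.
        * apply IHb. apply (Hded [And a b]). intros g [<-|[]]; auto.
          intros w _ Hw. specialize (Hw _ (or_introl eq_refl)). simpl in Hw.
          apply Bool.andb_true_iff in Hw. tauto.
    - split.
      + intros H. apply Bool.orb_true_iff in H. destruct H as [H|H].
        * apply (Hded [a]). intros g [<-|[]]; apply IHa; auto.
          intros w _ Hw. simpl. rewrite (Hw a (or_introl eq_refl)). reflexivity.
        * apply (Hded [b]). intros g [<-|[]]; apply IHb; auto.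
          intros w _ Hw. simpl. rewrite (Hw b (or_introl eq_refl)). apply Bool.orb_true_r.
      + intros H. apply Bool.orb_true_iff.
        destruct (classic (M a)) as [Ha|Ha]; [left; apply IHa; auto|].
        destruct (classic (M b)) as [Hb|Hb]; [right; apply IHb; auto|].
        exfalso.
        destruct (Hneg a) as [h|ha]; [contradiction|].
        destruct (Hneg b) as [h|hb]; [contradiction|].
        destruct (HFS [Or a b; Neg a; Neg b]) as [w [_ Hw]].
        { intros g [<-|[<-|[<-|[]]]]; auto. }
        assert (e1 := Hw _ (or_introl eq_refl)).
        assert (e2 := Hw _ (or_intror (or_introl eq_refl))).
        assert (e3 := Hw _ (or_intror (or_intror (or_introl eq_refl)))).
        simpl in *. destruct (eval w a); destruct (eval w b); discriminate. }
  exists v. split.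
  - split.
    + apply (Htruth (Var Tv)). apply (Hded []). intros g [].
      intros w Hw _. simpl. apply Hw.
    + assert (h : M (Neg (Var Fv))).
      { apply (Hded []). intros g []. intros w Hw _. simpl. destruct Hw as [_ ->]. reflexivity. }
      apply Htruth in h. simpl in h. destruct (v Fv); auto.
  - intros f Hf. apply Htruth. left. exact Hf.
Qed.

End Compact.

Lemma point_bet (P : Type) (phi : form P) : is_bet (point phi).
Proof.
  unfold is_bet, point. split.
  - intros f. destruct (excluded_middle_informative (f = phi)); lra.
  - exists [phi]. split; [constructor; [intros []|constructor]|]. split.
    + intros f H. destruct (excluded_middle_informative (f = phi)); [left; auto|lra].
    + simpl. destruct (excluded_middle_informative (phi = phi)); [lra|congruence].
Qed.

Lemma iw_mono (P : Type) (Tv Fv : P) (S1 S2 : form P -> Prop) phi psi :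
  (forall f, S1 f -> S2 f) -> implies_with Tv Fv S1 phi psi -> implies_with Tv Fv S2 phi psi.
Proof.
  intros H Hi v Hv Hs Hp. apply Hi; auto.
Qed.

Theorem proposition5 (P : Type) (Tv Fv : P)
  (pref : bet P -> bet P -> Prop)
  (HNT : NonTriviality Tv Fv pref)
  (HEU : ObjectiveEU pref)
  (HImp : Implication Tv Fv pref)
  (Th : form P -> Prop) (HTh : is_theory Tv Fv Th) :
  exists S : form P -> Prop,
    (is_theory Tv Fv S /\ (forall f, S f -> Th f) /\ S_Implication Tv Fv pref S /\
     (forall S' : form P -> Prop,
        (forall f, S f -> S' f) -> (exists f, S' f /\ ~ S f) ->
        (forall f, S' f -> Th f) -> ~ S_Implication Tv Fv pref S'))
    /\
    (forall S2 : form P -> Prop,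
       is_theory Tv Fv S2 -> (forall f, S2 f -> Th f) -> S_Implication Tv Fv pref S2 ->
       (forall S' : form P -> Prop,
          (forall f, S2 f -> S' f) -> (exists f, S' f /\ ~ S2 f) ->
          (forall f, S' f -> Th f) -> ~ S_Implication Tv Fv pref S') ->
       forall f, S2 f <-> S f).
Proof.
  destruct HEU as [_ [Htr _]].
  set (U := fun f => exists S', S' f /\ (forall g, S' g -> Th g) /\ S_Implication Tv Fv pref S').
  assert (HUTh : forall f, U f -> Th f).
  { intros f [S' [H1 [H2 _]]]. auto. }
  assert (Hlist : forall l, (forall f, In f l -> U f) -> forall phi psi,
            implies_with Tv Fv (fun f => In f l) phi psi -> pref (point psi) (point phi)).
  { induction l as [|s l IH]; intros Hl phi psi Hi.
    - apply HImp. exact Hi.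
    - destruct (Hl s (or_introl eq_refl)) as [S' [Hs [_ HS']]].
      assert (H1 : pref (point (And phi s)) (point phi)).
      { apply HS'. intros v _ Hv Hp. simpl. rewrite Hp, (Hv s Hs). reflexivity. }
      assert (H2 : pref (point psi) (point (And phi s))).
      { apply IH. { intros f Hf; apply Hl; right; auto. }
        intros v Hv Hs' Hp. simpl in Hp. apply Bool.andb_true_iff in Hp. destruct Hp as [Hp1 Hp2].
        apply Hi; auto. intros g [<-|Hg]; auto. }

      eapply Htr; [apply point_bet|apply point_bet|apply point_bet|exact H2|exact H1]. }
  assert (HUimp : S_Implication Tv Fv pref U).
  { intros phi psi Hi.
    destruct (classic (@FS P Tv Fv (fun f => U f \/ f = phi \/ f = Neg psi))) as [Hfs|Hfs].
    - exfalso. destruct (compactness _ _ _ _ Hfs) as [v [Hv Hs]].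
      assert (e := Hi v Hv (fun s H => Hs s (or_introl H)) (Hs phi (or_intror (or_introl eq_refl)))).
      assert (e2 := Hs (Neg psi) (or_intror (or_intror eq_refl))). simpl in e2. rewrite e in e2. discriminate.
    - apply NNPP. intros Hno. apply Hfs. clear Hfs.
      intros l Hl. apply NNPP. intros Hns. apply Hno.
      destruct (split_list2 _ U (fun f => f = phi \/ f = Neg psi) l) as [k [Hk1 Hk2]].
      { intros f Hf. destruct (Hl f Hf) as [h|h]; auto. }
      apply (Hlist k Hk1). intros v Hv Hs Hp.
      destruct (eval v psi) eqn:E; auto. exfalso. apply Hns. exists v. split; auto.
      intros f Hf. destruct (Hk2 f Hf) as [h|[h|h]]; auto; subst; simpl; auto. rewrite E; auto. }
  exists U. split; [split; [|split; [exact HUTh|split; [exact HUimp|]]]|].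
  - split.
    + intros psi Hd.
      assert (Hpsi : Th psi).
      { apply (proj1 HTh). intros v Hv Hs. apply Hd; auto. }
      exists (fun g => U g \/ g = psi). split; [right; auto|split].
      * intros g [h|h]; [apply HUTh; auto|subst; auto].
      * intros phi chi Hi. apply HUimp. intros v Hv Hs Hp. apply Hi; auto.
        intros s [h|h]; auto. subst. apply Hd; auto.
    + intros H. apply (proj2 HTh). apply HUTh; auto.
  - intros S' Hsub [f [Hf Hnf]] HS'Th HS'imp. apply Hnf. exists S'. auto.
  - intros S2 HS2 HS2Th HS2imp HS2max f. split.
    + intros h. exists S2. auto.
    + intros h. apply NNPP. intros hn. apply (HS2max U).
      * intros g hg. exists S2. auto.
      * exists f. auto.
      * exact HUTh.
      * exact HUimp.
Qed.
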